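(* Let $D\subseteq\mathcal A_-([0,1])$ be such that for all $0\le a<b\le1$ we have $[a,b]\in D$ and $\mathsf C_{[0,1]}|_D\le_W\mathsf C_{[a,b]}|_D$. Then $\mathsf C_{[0,1]}|_D$ is co-complete and co-total.
   Context: A problem $f:\subseteq X\rightrightarrows Y$ between represented spaces (sets with surjective partial $\delta:\subseteq\mathbb{N}^\mathbb{N}\to X$) is a partial multi-valued map; $F\vdash f$ means $\delta_YF(p)\in f(\delta_X(p))$ whenever $\delta_X(p)\in\mathrm{dom}(f)$; $f\le_W g$ iff there are computable partial $H,K$ with $H\langle\mathrm{id},GK\rangle\vdash f$ for all $G\vdash g$. $\mathcal A_-([0,1])$ is the space of closed subsets of $[0,1]$ represented by $p\mapsto[0,1]\setminus\bigcup_nB_{p(n)}$ for a standard enumeration $(B_n)$ of rational open balls; $\mathsf C_{[a,b]}$ is choice on $[a,b]$: $A\mapsto A$ for nonempty closed $A\subseteq[a,b]$. $\mathsf C_{[0,1]}|_D$ is the restriction of $\mathsf C_{[0,1]}$ to the nonempty sets in $D$, and $\mathsf C_{[a,b]}|_D$ the restriction of $\mathsf C_{[a,b]}$ to the nonempty sets in $D$ that are contained in $[a,b]$. For $p\in\mathbb{N}^\mathbb{N}$, $p-1$ is the concatenation of $p(0)-1,p(1)-1,\dots$ with $0-1$ the empty word; the completion of $(X,\delta_X)$ is $\overline X=X\cup\{\bot\}$ with $\delta_{\overline X}(p)=\delta_X(p-1)$ if $p-1$ is an infinite sequence in $\mathrm{dom}(\delta_X)$, $\bot$ otherwise. For $g:\subseteq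 U\rightrightarrows V$: $\overline g:\overline U\rightrightarrows\overline V$ equals $g$ on $\mathrm{dom}(g)$ and $\overline V$ elsewhere; $\mathsf Tg:U\rightrightarrows V$ equals $g$ on $\mathrm{dom}(g)$ and $V$ elsewhere. A problem $h$ is co-complete if $h\le_W\overline g\iff h\le_Wg$ for all problems $g$, and co-total if $h\le_W\mathsf Tg\iff h\le_Wg$ for all problems $g$. *)

(* Defs.v *)
From Stdlib Require Import Reals QArith List Arith Cantor.
Open Scope R_scope.

Definition baire := nat -> nat.

(** * Type-2 computability: mu-recursive functions with an oracle.
    A term [t] computes the partial function on Baire space
    p |-> (n |-> value of t on input [n] with oracle p). *)
Inductive prf : Type :=
| pZero : prf
| pSucc : prf
| pProj : nat -> prf
| pOracle : prf
| pComp : prf -> list prf -> prf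
| pRec : prf -> prf -> prf
| pMin : prf -> prf.

Inductive eval (p : baire) : prf -> list nat -> nat -> Prop :=
| eZero xs : eval p pZero xs 0
| eSucc xs : eval p pSucc xs (S (hd 0%nat xs))
| eProj i xs : eval p (pProj i) xs (nth i xs 0%nat)
| eOracle xs : eval p pOracle xs (p (hd 0%nat xs))
| eComp f gs xs ys v :
    evals p gs xs ys -> eval p f ys v -> eval p (pComp f gs) xs v
| eRec0 f g xs v : eval p f xs v -> eval p (pRec f g) (0%nat :: xs) v
| eRecS f g n xs w v :
    eval p (pRec f g) (n :: xs) w -> eval p g (n :: w :: xs) v ->
    eval p (pRec f g) (S n :: xs) v
| eMin f xs n :
    eval p f (n :: xs) 0%nat ->
    (forall m, (m < n)%nat -> exists k, eval p f (m :: xs) (S k)) ->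
    eval p (pMin f) xs n
with evals (p : baire) : list prf -> list nat -> list nat -> Prop :=
| esNil xs : evals p nil xs nil
| esCons g gs xs v vs :
    eval p g xs v -> evals p gs xs vs -> evals p (g :: gs) xs (v :: vs).

Definition comp_app (t : prf) (p q : baire) : Prop :=
  forall n, eval p t (n :: nil) (q n).

Definition bpair (p q : baire) : baire :=
  fun n => if Nat.even n then p (Nat.div2 n) else q (Nat.div2 n).

(** * Represented spaces: a carrier with a partial (relational) naming map. *)
Record rep_space : Type := RepSpace {
  carrier :> Type;
  delta : baire -> carrier -> Prop
}.

Definition is_rep (X : rep_space) : Prop :=
  (forall p x y, delta X p x -> delta X p y -> x = y) /\
  (forall x : carrier X, exists p, delta X p x).

(** * Problems: partial multi-valued maps X ⇉ Y, as relations;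
    dom f = { x | f x is nonempty }. *)
Definition problem (X Y : rep_space) := carrier X -> carrier Y -> Prop.

Definition pdom {X Y : rep_space} (f : problem X Y) (x : carrier X) : Prop :=
  exists y, f x y.

(** Realizers: arbitrary partial functions on Baire space. *)
Definition realizes {X Y : rep_space} (F : baire -> option baire)
  (f : problem X Y) : Prop :=
  forall p x, delta X p x -> pdom f x ->
    exists q, F p = Some q /\ exists y, delta Y q y /\ f x y.

(** Weihrauch reducibility: computable H, K with H<id, G K> |- f for all G |- g. *)
Definition leW {X Y U V : rep_space} (f : problem X Y) (g : problem U V) : Prop :=
  exists tH tK : prf,
    forall G : baire -> option baire, realizes G g ->
      forall p x, delta X p x -> pdom f x ->
        exists r, comp_app tK p r /\
        exists s, G r = Some s /\
        exists u, comp_app tH (bpair p s) u /\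
        exists y, delta Y u y /\ f x y.

(** [minus1 p q] : p-1 is the infinite sequence q, i.e. k enumerates
    (in increasing order) exactly the positions of nonzero entries of p
    and q n = p (k n) - 1. *)
Definition minus1 (p q : baire) : Prop :=
  exists k : nat -> nat,
    (forall n, (k n < k (S n))%nat) /\
    (forall n, p (k n) <> 0%nat /\ q n = (p (k n) - 1)%nat) /\
    (forall m, p m <> 0%nat -> exists n, k n = m).

Definition completion (X : rep_space) : rep_space :=
  {| carrier := option (carrier X);
     delta := fun p ox =>
       match ox with
       | Some x => exists q, minus1 p q /\ delta X q x
       | None => ~ (exists q x, minus1 p q /\ delta X q x)
       end |}.

Definition pcompletion {U V : rep_space} (g : problem U V)
  : problem (completion U) (completion V) :=
  fun ou ov =>
    match ou with
    | Some u => pdom g u -> exists v, ov = Some v /\ g u v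
    | None => True
    end.

Definition ptotal {U V : rep_space} (g : problem U V) : problem U V :=
  fun u v => pdom g u -> g u v.

Definition cocomplete {X Y : rep_space} (h : problem X Y) : Prop :=
  forall (U V : rep_space), is_rep U -> is_rep V ->
    forall g : problem U V, leW h (pcompletion g) <-> leW h g.

Definition cototal {X Y : rep_space} (h : problem X Y) : Prop :=
  forall (U V : rep_space), is_rep U -> is_rep V ->
    forall g : problem U V, leW h (ptotal g) <-> leW h g.

Definition qenum (n : nat) : Q :=
  let (a, r) := Cantor.of_nat n in
  let (b, c) := Cantor.of_nat r in
  ((Z.of_nat a - Z.of_nat b)%Z # Pos.of_succ_nat c)%Q.

Definition ball (n : nat) (x : R) : Prop :=
  let (i, j) := Cantor.of_nat n in
  Rabs (x - Q2R (qenum i)) < Q2R (qenum j).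

Definition closed_of (p : baire) (x : R) : Prop :=
  0 <= x <= 1 /\ forall n, ~ ball (p n) x.

Definition closed01_set : Type := { A : R -> Prop | exists p, A = closed_of p }.

Definition Closed01 : rep_space :=
  {| carrier := closed01_set;
     delta := fun p A => proj1_sig A = closed_of p |}.

Definition cauchy (p : baire) (x : R) : Prop :=
  forall n, Rabs (Q2R (qenum (p n)) - x) <= / 2 ^ n.

Definition Interval (a b : R) : rep_space :=
  {| carrier := { x : R | a <= x <= b };
     delta := fun p x => cauchy p (proj1_sig x) |}.

Definition C01_D (D : closed01_set -> Prop) : problem Closed01 (Interval 0 1) :=
  fun A x => D A /\ proj1_sig A (proj1_sig x).

Definition Cab_D (a b : R) (D : closed01_set -> Prop)
  : problem Closed01 (Interval a b) :=
  fun A x => D A /\ (forall y, proj1_sig A y -> a <= y <= b) /\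
             proj1_sig A (proj1_sig x).

(* Main.v *)
Require Import Defs.
From Stdlib Require Import Reals QArith List Arith Cantor Lia Lra.
From Stdlib Require Import FunctionalExtensionality PropExtensionality ProofIrrelevance ClassicalEpsilon Classical.
Open Scope R_scope.
Import ListNotations.

Module Part1.
Local Open Scope nat_scope.

Fixpoint psize (t : prf) : nat :=
  match t with
  | pComp f gs => S (psize f + fold_right (fun g acc => psize g + acc) 0%nat gs)
  | pRec f g => S (psize f + psize g)
  | pMin f => S (psize f)
  | _ => 1%nat
  end.

Definition Det (p : baire) (t : prf) := forall xs v v', eval p t xs v -> eval p t xs v' -> v = v'.

Lemma evals_det p n gs : (forall g, In g gs -> (psize g < n)%nat -> Det p g) ->
  (fold_right (fun g acc => psize g + acc) 0%nat gs < n)%nat ->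
  forall xs ys ys', evals p gs xs ys -> evals p gs xs ys' -> ys = ys'.
Proof.
  intros IH. induction gs as [|g gs IHg]; intros Hs xs ys ys' H1 H2.
  - inversion H1; inversion H2; auto.
  - inversion H1; subst. inversion H2; subst. simpl in Hs.
    f_equal.
    + eapply (IH g); eauto. left; auto. lia.
    + eapply IHg; eauto. intros; apply IH; auto. right; auto. lia.
Qed.

Lemma det_all p : forall t, Det p t.
Proof.
  assert (forall n t, (psize t < n)%nat -> Det p t).
  { induction n as [|n IHn]; intros t Hs; [lia|].
    destruct t; simpl in Hs; intros xs v v' H1 H2.
    - inversion H1; inversion H2; auto.
    - inversion H1; inversion H2; subst; auto.
    - inversion H1; inversion H2; subst; auto.
    - inversion H1; inversion H2; subst; auto.
    - inversion H1; subst. inversion H2; subst.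
      assert (ys = ys0).
      { refine (evals_det p n l _ _ xs ys ys0 H3 H4). intros; apply IHn; auto. lia. }
      subst. eapply (IHn t); eauto. lia.
    - revert xs v v' H1 H2. intros xs. destruct xs as [|k xs]; intros v v' H1 H2.
      + inversion H1.
      + revert v v' H1 H2. induction k as [|k IHk]; intros v v' H1 H2.
        * inversion H1; subst; inversion H2; subst. eapply (IHn t1); eauto. lia.
        * inversion H1; subst; inversion H2; subst.
          assert (w = w0) by (eapply IHk; eauto). subst.
          eapply (IHn t2); eauto. lia.
    - inversion H1; subst; inversion H2; subst.
      destruct (Nat.lt_trichotomy v v') as [Hl|[He|Hl]]; auto.
      + destruct (H5 v Hl) as [k Hk].
        assert (0%nat = S k) by (apply (IHn t ltac:(lia) _ _ _ H0 Hk)). discriminate.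
      + destruct (H3 v' Hl) as [k Hk].
        assert (0%nat = S k) by (apply (IHn t ltac:(lia) _ _ _ H4 Hk)). discriminate. }
  intros t; eapply H; eauto.
Qed.

Definition agree (N : nat) (p o : baire) := forall i, (i < N)%nat -> o i = p i.

Definition Cont (p : baire) (t : prf) := forall xs v, eval p t xs v ->
  exists N, forall o, agree N p o -> eval o t xs v.

Lemma agree_mono N M p o : (N <= M)%nat -> agree M p o -> agree N p o.
Proof. intros H A i Hi; apply A; lia. Qed.

Lemma evals_cont p n gs : (forall g, In g gs -> (psize g < n)%nat -> Cont p g) ->
  (fold_right (fun g acc => psize g + acc) 0%nat gs < n)%nat ->
  forall xs ys, evals p gs xs ys -> exists N, forall o, agree N p o -> evals o gs xs ys.
Proof.
  intros IH. induction gs as [|g gs IHg]; intros Hs xs ys H1.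
  - inversion H1; subst. exists 0%nat; intros; constructor.
  - inversion H1; subst. simpl in Hs.
    destruct (IH g (or_introl eq_refl) ltac:(lia) _ _ H2) as [N1 HN1].
    destruct (IHg (fun g' Hi => IH g' (or_intror Hi)) ltac:(lia) _ _ H5) as [N2 HN2].
    exists (Nat.max N1 N2); intros o A. constructor.
    + apply HN1; eapply agree_mono; [|eauto]; lia.
    + apply HN2; eapply agree_mono; [|eauto]; lia.
Qed.

Lemma cont_all p : forall t, Cont p t.
Proof.
  assert (forall n t, (psize t < n)%nat -> Cont p t).
  { induction n as [|n IHn]; intros t Hs; [lia|].
    destruct t; simpl in Hs; intros xs v H1.
    - inversion H1; subst; exists 0%nat; intros; constructor.
    - inversion H1; subst; exists 0%nat; intros; constructor.
    - inversion H1; subst; exists 0%nat; intros; constructor.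
    - inversion H1; subst. exists (S (hd 0%nat xs)); intros o A.
      rewrite <- (A (hd 0%nat xs)) by lia. constructor.
    - inversion H1; subst.
      match goal with Ha : evals _ _ _ _, Hb : eval _ t _ _ |- _ =>
      destruct (evals_cont p n l (fun g _ Hg => IHn g Hg) ltac:(lia) _ _ Ha) as [N1 HN1];
      destruct (IHn t ltac:(lia) _ _ Hb) as [N2 HN2] end.
      exists (Nat.max N1 N2); intros o A. econstructor.
      + apply HN1; eapply agree_mono; [|eauto]; lia.
      + apply HN2; eapply agree_mono; [|eauto]; lia.
    - revert v H1. destruct xs as [|k xs]; intros v H1; [inversion H1|].
      revert v H1. induction k as [|k IHk]; intros v H1.
      + inversion H1; subst. match goal with Hb : eval _ t1 _ _ |- _ =>
        destruct (IHn t1 ltac:(lia) _ _ Hb) as [N HN] end.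
        exists N; intros o A; constructor; auto.
      + inversion H1; subst. match goal with Ha : eval _ (pRec _ _) _ _, Hb : eval _ t2 _ _ |- _ =>
        destruct (IHk _ Ha) as [N1 HN1];
        destruct (IHn t2 ltac:(lia) _ _ Hb) as [N2 HN2] end.
        exists (Nat.max N1 N2); intros o A. econstructor.
        * apply HN1; eapply agree_mono; [|eauto]; lia.
        * apply HN2; eapply agree_mono; [|eauto]; lia.
    - inversion H1; subst.
      match goal with Hb : eval _ t _ 0 |- _ =>
      destruct (IHn t ltac:(lia) _ _ Hb) as [N0 HN0] end.
      match goal with Hb : forall m, _ -> exists k, _ |- _ => rename Hb into H4 end.
      assert (forall m, (m <= v)%nat -> exists N, forall o, agree N p o ->
                forall j, (j < m)%nat -> exists k, eval o t (j :: xs) (S k)) as HM.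
      { induction m as [|m IHm]; intros Hm.
        - exists 0%nat; intros; lia.
        - destruct (IHm ltac:(lia)) as [N1 HN1].
          destruct (H4 m ltac:(lia)) as [k Hk].
          destruct (IHn t ltac:(lia) _ _ Hk) as [N2 HN2].
          exists (Nat.max N1 N2); intros o A j Hj.
          destruct (Nat.eq_dec j m) as [->|Hne].
          + exists k; apply HN2; eapply agree_mono; [|eauto]; lia.
          + apply (HN1 o); [eapply agree_mono; [|eauto]; lia|lia]. }
      destruct (HM v (le_n _)) as [N1 HN1].
      exists (Nat.max N0 N1); intros o A. constructor.
      + apply HN0; eapply agree_mono; [|eauto]; lia.
      + apply (HN1 o). eapply agree_mono; [|eauto]; lia. }
  intros t; eapply H; eauto.
Qed.

End Part1.
Import Part1.

Module Part2.
Local Open Scope nat_scope.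

Fixpoint psubst (s t : prf) : prf :=
  match t with
  | pOracle => pComp s [pProj 0]
  | pComp f gs => pComp (psubst s f) (map (psubst s) gs)
  | pRec f g => pRec (psubst s f) (psubst s g)
  | pMin f => pMin (psubst s f)
  | x => x
  end.

Lemma psubst_evals p q s n gs :
  (forall g, In g gs -> psize g < n -> forall xs v, eval q g xs v -> eval p (psubst s g) xs v) ->
  fold_right (fun g acc => psize g + acc) 0 gs < n ->
  forall xs ys, evals q gs xs ys -> evals p (map (psubst s) gs) xs ys.
Proof.
  intros IH. induction gs as [|g gs IHg]; intros Hs xs ys H1.
  - inversion H1; subst; constructor.
  - inversion H1; subst. simpl in Hs. simpl. constructor.
    + apply IH; auto. left; auto. lia.
    + apply IHg; auto. intros; apply IH; auto. right; auto. lia.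
Qed.

Lemma psubst_ok p q s : comp_app s p q ->
  forall t xs v, eval q t xs v -> eval p (psubst s t) xs v.
Proof.
  intros Hs.
  assert (forall n t, psize t < n -> forall xs v, eval q t xs v -> eval p (psubst s t) xs v).
  { induction n as [|n IHn]; intros t Ht; [lia|].
    destruct t; simpl in Ht; intros xs v H1; simpl.
    - inversion H1; subst; constructor.
    - inversion H1; subst; constructor.
    - inversion H1; subst; constructor.
    - inversion H1; subst. econstructor.
      + constructor; [constructor|constructor].
      + replace (nth 0 xs 0) with (hd 0 xs) by (destruct xs; auto). apply Hs.
    - inversion H1; subst. econstructor.
      + match goal with Ha : evals _ _ _ _ |- _ =>
          apply (psubst_evals p q s n l (fun g _ Hg => IHn g Hg) ltac:(lia) _ _ Ha) end.
      + apply IHn; auto; lia.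
    - destruct xs as [|k xs]; [inversion H1|].
      revert v H1. induction k as [|k IHk]; intros v H1.
      + inversion H1; subst. constructor. apply IHn; auto; lia.
      + inversion H1; subst. econstructor.
        * apply IHk; eauto.
        * apply IHn; eauto; lia.
    - inversion H1; subst. constructor.
      + apply IHn; auto; lia.
      + intros m Hm. match goal with Hb : forall m, _ -> exists k, _ |- _ =>
          destruct (Hb m Hm) as [k Hk] end. exists k. apply IHn; auto; lia. }
  intros t; eapply H; eauto.
Qed.

Lemma subst_comp p q w s t : comp_app s p q -> comp_app t q w -> comp_app (psubst s t) p w.
Proof. intros H1 H2 n. apply (psubst_ok p q s H1); auto. Qed.

Definition pred_p := pRec pZero (pProj 0).
Lemma pred_ok p n xs : eval p pred_p (n :: xs) (Nat.pred n).
Proof. induction n. - apply eRec0, eZero. - eapply eRecS; [eauto|]. apply (eProj p 0 (n :: _ :: xs)). Qed.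

Definition double_p := pRec pZero (pComp pSucc [pComp pSucc [pProj 1]]).
Lemma double_ok p n xs : eval p double_p (n :: xs) (2 * n).
Proof.
  induction n. - constructor; constructor.
  - replace (2 * S n) with (S (S (2 * n))) by lia. econstructor; [eauto|].
    econstructor. constructor; [|constructor]. econstructor.
    constructor; [|constructor]. constructor. simpl. constructor. simpl. constructor.
Qed.

Definition iszero_p := pRec (pComp pSucc [pZero]) pZero.
Definition iszero (n : nat) := match n with 0 => 1 | _ => 0 end.
Lemma iszero_ok p n xs : eval p iszero_p (n :: xs) (iszero n).
Proof.
  assert (H0 : eval p iszero_p (0 :: xs) 1).
  { apply eRec0. econstructor. constructor; [constructor|constructor]. apply eSucc. }
  induction n. - exact H0.
  - simpl. eapply eRecS; [exact IHn|apply eZero].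
Qed.

Lemma condrec_ok p n vy vx : eval p (pRec (pProj 0) (pProj 3)) [n; vy; vx] (match n with 0 => vy | _ => vx end).
Proof.
  induction n. - apply eRec0. apply (eProj p 0 [vy; vx]).
  - eapply eRecS. exact IHn. apply (eProj p 3 [n; _; vy; vx]).
Qed.
Definition cond_p c y x := pComp (pRec (pProj 0) (pProj 3)) [c; y; x].
Lemma cond_ok p c y x xs vc vy vx : eval p c xs vc -> eval p y xs vy -> eval p x xs vx ->
  eval p (cond_p c y x) xs (match vc with 0 => vy | _ => vx end).
Proof.
  intros Hc Hy Hx. econstructor.
  - constructor; [eauto|constructor; [eauto|constructor; [eauto|constructor]]].
  - apply condrec_ok.
Qed.

Definition sub_p := pRec (pProj 0) (pComp pred_p [pProj 1]).
Lemma sub_ok p b a xs : eval p sub_p (b :: a :: xs) (a - b).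
Proof.
  induction b. - constructor. replace (a - 0) with a by lia. apply (eProj p 0 (a :: xs)).
  - econstructor; [eauto|]. econstructor. constructor; [constructor|constructor].
    simpl. replace (a - S b) with (Nat.pred (a - b)) by lia. apply pred_ok.
Qed.

Definition par_p := pRec pZero (pComp iszero_p [pProj 1]).
Lemma par_ok p n xs : eval p par_p (n :: xs) (if Nat.even n then 0 else 1).
Proof.
  induction n. - constructor; constructor.
  - econstructor; [eauto|]. econstructor. constructor; [constructor|constructor].
    simpl nth. replace (Nat.even (S n)) with (negb (Nat.even n)) by (rewrite Nat.even_succ, <- Nat.negb_even; auto).
    destruct (Nat.even n); apply iszero_ok.
Qed.

Definition div2_p := pRec pZero (cond_p (pComp par_p [pProj 0]) (pProj 1) (pComp pSucc [pProj 1])).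
Lemma div2_ok p n xs : eval p div2_p (n :: xs) (Nat.div2 n).
Proof.
  induction n. - constructor; constructor.
  - econstructor; [eauto|].
    assert (E : Nat.div2 (S n) = match (if Nat.even n then 0 else 1) with 0 => Nat.div2 n | _ => S (Nat.div2 n) end).
    { destruct (Nat.Even_or_Odd n) as [[m Hm]|[m Hm]]; subst.
      - rewrite Nat.even_mul. change (Nat.even 2) with true. simpl orb.
        rewrite Nat.div2_succ_double, Nat.div2_double. auto.
      - replace (S (2 * m + 1)) with (2 * S m) by lia.
        rewrite Nat.div2_double. replace (2 * m + 1) with (S (2 * m)) by lia.
        rewrite Nat.even_succ, Nat.odd_mul. change (Nat.odd 2) with false. simpl andb.
        cbv iota. rewrite Nat.div2_succ_double. auto. }
    rewrite E. apply cond_ok.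
    + econstructor. constructor; [constructor|constructor]. apply par_ok.
    + apply (eProj p 1 (n :: Nat.div2 n :: xs)).
    + econstructor. constructor; [constructor|constructor]. constructor.
Qed.

Definition pair_p t1 t2 := cond_p par_p (pComp t1 [div2_p]) (pComp t2 [div2_p]).
Lemma pair_ok p t1 t2 a b : comp_app t1 p a -> comp_app t2 p b -> comp_app (pair_p t1 t2) p (bpair a b).
Proof.
  intros H1 H2 n. unfold bpair.
  replace (if Nat.even n then a (Nat.div2 n) else b (Nat.div2 n)) with
    (match (if Nat.even n then 0 else 1) with 0 => a (Nat.div2 n) | _ => b (Nat.div2 n) end)
    by (destruct (Nat.even n); auto).
  apply cond_ok.
  - apply par_ok.
  - econstructor. constructor; [apply div2_ok|constructor]. apply H1.
  - econstructor. constructor; [apply div2_ok|constructor]. apply H2.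
Qed.

Definition id_p := pOracle.
Lemma id_ok p : comp_app id_p p p.
Proof. intros n. apply (eOracle p [n]). Qed.

Definition plus1_p := pComp pSucc [pOracle].
Lemma plus1_ok p : comp_app plus1_p p (fun n => S (p n)).
Proof. intros n. econstructor. constructor; [constructor|constructor]. constructor. Qed.

Definition peven_p := pComp pOracle [double_p].
Definition podd_p := pComp pOracle [pComp pSucc [double_p]].
Lemma peven_ok a b : comp_app peven_p (bpair a b) a.
Proof.
  intros n. econstructor. constructor; [apply double_ok|constructor].
  assert (E : bpair a b (2 * n) = a n).
  { unfold bpair. rewrite Nat.even_mul, Nat.div2_double. auto. }
  rewrite <- E. apply (eOracle (bpair a b) [2 * n]).
Qed.
Lemma podd_ok a b : comp_app podd_p (bpair a b) b.
Proof.
  intros n. econstructor. constructor; [|constructor].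
  econstructor. constructor; [apply double_ok|constructor]. constructor.
  assert (E : bpair a b (S (2 * n)) = b n).
  { unfold bpair. rewrite Nat.even_succ, Nat.odd_mul, Nat.div2_succ_double. auto. }
  rewrite <- E. apply (eOracle (bpair a b) [S (2 * n)]).
Qed.

Definition pad1_p := pRec pZero pOracle.
Definition pad1 (p : baire) : baire := fun n => match n with 0 => 0 | S m => p m end.
Lemma pad1_ok p : comp_app pad1_p p (pad1 p).
Proof.
  intros n. destruct n. - constructor; constructor.
  - assert (exists w, eval p pad1_p [n] w) as [w Hw].
    { clear. induction n. eexists; apply eRec0, eZero. destruct IHn as [w Hw].
      eexists. eapply eRecS. exact Hw. apply (eOracle p [n; w]). }
    econstructor. eauto. simpl. apply (eOracle p (n :: w :: nil)).
Qed.
Fixpoint padn (N : nat) (p : baire) : baire := match N with 0 => p | S M => pad1 (padn M p) end.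
Fixpoint padn_p (N : nat) : prf := match N with 0 => id_p | S M => psubst (padn_p M) pad1_p end.
Lemma padn_ok N p : comp_app (padn_p N) p (padn N p).
Proof.
  induction N. apply id_ok. change (comp_app (psubst (padn_p N) pad1_p) p (pad1 (padn N p))).
  eapply subst_comp; eauto. apply pad1_ok.
Qed.
Lemma padn_zero N p i : i < N -> padn N p i = 0.
Proof.
  revert i; induction N; intros i Hi; [lia|]. simpl. destruct i; simpl; auto. apply IHN; lia.
Qed.
Lemma padn_range N p i : (exists j, padn N p i = p j) \/ padn N p i = 0.
Proof.
  revert i; induction N; intros i; simpl. left; eauto. destruct i; simpl; auto.
Qed.
Lemma padn_surj N p j : padn N p (N + j) = p j.
Proof. induction N; simpl; auto. Qed.

End Part2.
Import Part2.

Module Part3.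
Local Open Scope nat_scope.

Definition f0_p := pComp iszero_p [pOracle].
Definition fS_p := cond_p (pComp sub_p [pProj 0; pComp pSucc [pProj 2]]) f0_p (pComp pSucc [pZero]).
Definition kprog := pRec (pMin f0_p) (pMin fS_p).
Definition m1_p := pComp pred_p [pComp pOracle [kprog]].

Lemma f0_ok p m xs : eval p f0_p (m :: xs) (iszero (p m)).
Proof. econstructor. constructor; [apply (eOracle p (m :: xs))|constructor]. apply iszero_ok. Qed.

Lemma fS_ok p m n w : eval p fS_p [m; n; w]
  (match S w - m with 0 => iszero (p m) | _ => 1 end).
Proof.
  apply cond_ok.
  - econstructor. constructor; [apply (eProj p 0 [m; n; w])|constructor; [|constructor]].
    econstructor. constructor; [apply (eProj p 2 [m; n; w])|constructor]. apply eSucc.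
    apply sub_ok.
  - apply f0_ok.
  - econstructor. constructor; [apply eZero|constructor]. apply eSucc.
Qed.

Lemma strict_mono (k : nat -> nat) : (forall n, k n < k (S n)) -> forall i j, i < j -> k i < k j.
Proof.
  intros H i j Hij. induction j; [lia|]. destruct (Nat.eq_dec i j) as [->|Hn]; auto.
  specialize (IHj ltac:(lia)). specialize (H j). lia.
Qed.

Lemma m1_ok p q : minus1 p q -> comp_app m1_p p q.
Proof.
  intros [k [Hinc [Hk Hall]]].
  assert (M := strict_mono k Hinc).
  assert (Kn : forall n, eval p kprog [n] (k n)).
  { induction n.
    - apply eRec0. constructor.
      + destruct (Hk 0) as [H1 _]. replace 0 with (iszero (p (k 0))) at 2.
        apply f0_ok. destruct (p (k 0)); simpl; auto; lia.
      + intros m Hm. exists 0. replace 1 with (iszero (p m)).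
        apply f0_ok. destruct (p m) eqn:E; simpl; auto.
        destruct (Hall m ltac:(lia)) as [j Hj]. subst m.
        destruct j; [lia|]. specialize (M 0 (S j) ltac:(lia)). lia.
    - eapply eRecS. exact IHn. constructor.
      + destruct (Hk (S n)) as [H1 _]. specialize (Hinc n).
        replace 0 with (match S (k n) - k (S n) with 0 => iszero (p (k (S n))) | _ => 1 end).
        apply fS_ok. replace (S (k n) - k (S n)) with 0 by lia.
        destruct (p (k (S n))); simpl; auto; lia.
      + intros m Hm. exists 0.
        replace 1 with (match S (k n) - m with 0 => iszero (p m) | _ => 1 end).
        apply fS_ok. destruct (S (k n) - m) eqn:E; auto.
        destruct (p m) eqn:E2; simpl; auto.
        destruct (Hall m ltac:(lia)) as [j Hj]. subst m.
        destruct (Nat.lt_trichotomy j n) as [Hl|[->|Hl]].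
        * specialize (M _ _ Hl); lia.
        * lia.
        * destruct (Nat.eq_dec j (S n)) as [->|Hne]; [lia|].
          specialize (M (S n) j ltac:(lia)). lia. }
  intros n. econstructor. constructor; [|constructor].
  econstructor. constructor; [apply Kn|constructor]. apply (eOracle p [k n]).
  simpl. destruct (Hk n) as [_ ->]. replace (p (k n) - 1) with (Nat.pred (p (k n))) by lia.
  apply pred_ok.
Qed.

Lemma minus1_plus1 p : minus1 (fun n => S (p n)) p.
Proof.
  exists (fun n => n). split; [intros; lia|split]. intros; split; lia. intros m _; eauto.
Qed.

Lemma minus1_fun p q1 q2 : minus1 p q1 -> minus1 p q2 -> q1 = q2.
Proof.
  intros H1 H2. apply m1_ok in H1, H2.
  extensionality n. eapply det_all; eauto.
Qed.

Lemma minus1_zeros q : ~ minus1 (fun _ => 0) q.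
Proof. intros [k [_ [Hk _]]]. destruct (Hk 0); auto. Qed.

End Part3.
Import Part3.

Module Part4.

Lemma ball0_empty x : ~ ball 0 x.
Proof.
  unfold ball. simpl. unfold qenum. simpl.
  replace (Q2R (0 # 1)) with 0 by (unfold Q2R; simpl; field).
  intros H. pose proof (Rabs_pos (x - 0)). lra.
Qed.

Lemma closed_zeros : closed_of (fun _ => 0%nat) = fun x => 0 <= x <= 1.
Proof.
  extensionality x. apply propositional_extensionality. unfold closed_of. split.
  - tauto.
  - intros H; split; auto. intros n; apply ball0_empty.
Qed.

Lemma closed_padn N p : closed_of (padn N p) = closed_of p.
Proof.
  extensionality x. apply propositional_extensionality. unfold closed_of. split.
  - intros [H1 H2]; split; auto. intros n. rewrite <- padn_surj with (N := N). apply H2.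
  - intros [H1 H2]; split; auto. intros n.
    destruct (padn_range N p n) as [[j ->] | ->]; auto. apply ball0_empty.
Qed.

Lemma closed01_eq (A B : closed01_set) : proj1_sig A = proj1_sig B -> A = B.
Proof.
  destruct A as [a Ha], B as [b Hb]; simpl; intros ->. f_equal. apply proof_irrelevance.
Qed.

Lemma choose_ab (c : R) : exists a b, 0 <= a /\ a < b /\ b <= 1 /\
  forall z, a <= z <= b -> / 2 ^ 3 < Rabs (c - z).
Proof.
  replace (/ 2 ^ 3) with (1/8) by (simpl; field).
  destruct (Rle_dec (1/2) c).
  - exists 0, (1/8). repeat split; try lra. intros z Hz.
    rewrite Rabs_right; lra.
  - exists (7/8), 1. repeat split; try lra. intros z Hz.
    rewrite Rabs_left; lra.
Qed.

Lemma comp_app_fun t p w1 w2 : comp_app t p w1 -> comp_app t p w2 -> w1 = w2.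
Proof. intros H1 H2. extensionality n. eapply det_all; eauto. Qed.

End Part4.
Import Part4.

Module Part5.

Definition HypD (D : closed01_set -> Prop) :=
  forall a b : R, 0 <= a -> a < b -> b <= 1 ->
     (exists A : closed01_set, D A /\ forall x, proj1_sig A x <-> a <= x <= b) /\
     leW (C01_D D) (Cab_D a b D).

Lemma A01_ex D : HypD D -> exists A, D A /\ delta Closed01 (fun _ => 0%nat) A /\ pdom (C01_D D) A.
Proof.
  intros H. destruct (H 0 1 ltac:(lra) ltac:(lra) ltac:(lra)) as [[A [HA HAs]] _].
  exists A. split; auto. split.
  - simpl. rewrite closed_zeros. extensionality x. apply propositional_extensionality. apply HAs.
  - exists (exist _ 0 (conj (Rle_refl 0) Rle_0_1)). split; auto. apply HAs. simpl. lra.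
Qed.

Lemma core (D : closed01_set -> Prop) (HD : HypD D)
  (U V : rep_space) (HU : is_rep U) (HV : is_rep V) (g : problem U V)
  (U' V' : rep_space) (g' : problem U' V') (Good : baire -> Prop) (tA tB : prf)
  (Gex : exists G, realizes G g)
  (A0 : exists q0 y0, delta V' q0 y0)
  (A1 : forall s0 y0, delta V' s0 y0 -> forall r ou, delta U' r ou -> ~ Good r -> g' ou y0)
  (A2 : forall G, realizes G g -> exists Gg,
      (forall r, Good r -> exists ou, delta U' r ou) /\
      (forall r ou, Good r -> delta U' r ou -> exists s', Gg r = Some s' /\ exists y, delta V' s' y /\ g' ou y) /\
      (forall r s', Good r -> Gg r = Some s' -> exists q s, comp_app tA r q /\ G q = Some s /\ comp_app tB s s'))
  : leW (C01_D D) g' -> leW (C01_D D) g.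
Proof.
  intros [tH [tK Hred]].
  destruct (A01_ex D HD) as [A01 [DA01 [HA01 HdA01]]].
  destruct A0 as [q0 [y0 Hq0]].
  destruct Gex as [G0 HG0].
  destruct (A2 G0 HG0) as [Gg0 [P0 [P1 P2]]].
  set (Gs := fun r => match excluded_middle_informative (Good r) with
                      | left _ => Gg0 r | right _ => Some q0 end).
  assert (HGs : realizes Gs g').
  { intros r ou Hr Hd. unfold Gs. destruct (excluded_middle_informative (Good r)) as [Hg|Hg].
    - destruct (P1 r ou Hg Hr) as [s' [E [y [Hy1 Hy2]]]]. eauto.
    - exists q0. split; auto. exists y0. split; auto. eapply A1; eauto. }
  destruct (Hred Gs HGs _ _ HA01 HdA01) as [r0 [Hr0 [s0 [Hs0 [u0 [Hu0 [y [Hy Hhy]]]]]]]].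
  assert (Hs0n : exists z0, delta V' s0 z0).
  { unfold Gs in Hs0. destruct (excluded_middle_informative (Good r0)) as [Hg|Hg].
    - destruct (P0 r0 Hg) as [ou Hou]. destruct (P1 r0 ou Hg Hou) as [s' [E [y' [Hy1 Hy2]]]].
      rewrite E in Hs0; injection Hs0; intros ->; eauto.
    - injection Hs0; intros <-; eauto. }
  destruct Hs0n as [z0 Hz0].
  destruct (cont_all _ tH [3%nat] (u0 3%nat) (Hu0 3%nat)) as [N HN].
  destruct (choose_ab (Q2R (qenum (u0 3%nat)))) as [a [b [Ha [Hab [Hb Hfar]]]]].
  destruct (HD a b Ha Hab Hb) as [_ [tH1 [tK1 Hred1]]].
  exists (psubst (pair_p peven_p (psubst (pair_p (psubst (psubst peven_p tK1) (padn_p N))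
                                              (psubst podd_p tB)) tH)) tH1).
  exists (psubst (psubst (psubst tK1 (padn_p N)) tK) tA).
  intros G HG p x Hpx Hdx.
  destruct (A2 G HG) as [Gg [Q0 [Q1 Q2]]].
  set (G' := fun r => match excluded_middle_informative (Good r) with
                      | left _ => Gg r | right _ => Some s0 end).
  assert (HG' : realizes G' g').
  { intros r ou Hr Hd. unfold G'. destruct (excluded_middle_informative (Good r)) as [Hg|Hg].
    - destruct (Q1 r ou Hg Hr) as [s' [E [y' [Hy1 Hy2]]]]. eauto.
    - exists s0. split; auto. exists z0. split; auto. eapply A1; eauto. }
  set (Chain := fun p' w => exists r q s s', comp_app tK (padn N p') r /\ comp_app tA r q /\
      G q = Some s /\ comp_app tB s s' /\ comp_app tH (bpair (padn N p') s') w).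
  assert (Key : forall p' A, delta Closed01 p' A -> pdom (Cab_D a b D) A ->
     exists w, Chain p' w /\ exists y, delta (Interval 0 1) w y /\ C01_D D A y).
  { intros p' A Hp' [xa [DA [Asub Axa]]].
    assert (Hp'' : delta Closed01 (padn N p') A) by (simpl in *; rewrite closed_padn; auto).
    assert (HdA : pdom (C01_D D) A).
    { assert (H01 : 0 <= proj1_sig xa <= 1).
      { simpl in Hp'. rewrite Hp' in Axa. destruct Axa; auto. }
      exists (exist _ (proj1_sig xa) H01). split; auto. }
    destruct (Hred G' HG' _ _ Hp'' HdA) as [r [Hr [s' [Hs' [w [Hw [y' [Hy' Hhy']]]]]]]].
    unfold G' in Hs'. destruct (excluded_middle_informative (Good r)) as [Hg|Hg].
    - destruct (Q2 r s' Hg Hs') as [q [s [Hq [Hs Hss]]]].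
      exists w. split; [|eauto]. exists r, q, s, s'. auto.
    - exfalso. injection Hs'; intros <-.
      assert (Hag : agree N (bpair (fun _ => 0%nat) s0) (bpair (padn N p') s0)).
      { intros i Hi. unfold bpair. destruct (Nat.even i); auto.
        rewrite padn_zero; [reflexivity|]. pose proof (Nat.le_div2_diag_l i). lia. }
      pose proof (HN _ Hag) as Ev.
      assert (E3 : w 3%nat = u0 3%nat) by (eapply det_all; [apply Hw|exact Ev]).
      destruct Hhy' as [_ Hy'A]. destruct y' as [yv Hyv].
      change (cauchy w yv) in Hy'. specialize (Hy' 3%nat). rewrite E3 in Hy'.
      change (proj1_sig A yv) in Hy'A.
      specialize (Hfar yv (Asub yv Hy'A)). pose proof (Rabs_minus_sym yv (Q2R (qenum (u0 3%nat)))). lra. }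
  set (G1 := fun p' => match excluded_middle_informative (exists w, Chain p' w) with
                       | left e => Some (proj1_sig (constructive_indefinite_description _ e))
                       | right _ => None end).
  assert (ChainU : forall p' w1 w2, Chain p' w1 -> Chain p' w2 -> w1 = w2).
  { intros p' w1 w2 [r [q [s [s' [H1 [H2 [H3 [H4 H5]]]]]]]] [r' [q' [t [t' [I1 [I2 [I3 [I4 I5]]]]]]]].
    assert (r = r') by (eapply comp_app_fun; eauto). subst r'.
    assert (q = q') by (eapply comp_app_fun; eauto). subst q'.
    rewrite H3 in I3; injection I3; intros <-.
    assert (s' = t') by (eapply comp_app_fun; eauto). subst t'.
    eapply comp_app_fun; eauto. }
  assert (HG1 : realizes G1 (Cab_D a b D)).
  { intros p' A Hp' Hd. destruct (Key p' A Hp' Hd) as [w [Hc Hy1]].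
    unfold G1. destruct (excluded_middle_informative (exists w, Chain p' w)) as [e|e].
    - destruct (constructive_indefinite_description _ e) as [w' Hw']. simpl.
      exists w'. split; auto. rewrite (ChainU _ _ _ Hw' Hc).
      destruct Hd as [xa [DA [Asub _]]].
      destruct Hy1 as [[yv Hyv] [Hy1 [_ HyA]]].
      exists (exist _ yv (Asub yv HyA)). split; [exact Hy1|]. split; auto.
    - exfalso; eauto. }
  destruct (Hred1 G1 HG1 p x Hpx Hdx) as [r1 [Hr1 [s1 [Hs1 [u [Hu Hfin]]]]]].
  unfold G1 in Hs1. destruct (excluded_middle_informative (exists w, Chain r1 w)) as [e|e]; [|discriminate].
  destruct (constructive_indefinite_description _ e) as [w Hw]. simpl in Hs1.
  injection Hs1; intros <-.
  destruct Hw as [r [q [s [s' [H1 [H2 [H3 [H4 H5]]]]]]]].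
  exists q. split.
  { eapply subst_comp; [|exact H2]. eapply subst_comp; [|exact H1].
    eapply subst_comp; [exact Hr1|]. apply padn_ok. }
  exists s. split; auto.
  exists u. split; auto.
  eapply subst_comp; [|exact Hu].
  apply pair_ok. apply peven_ok.
  eapply subst_comp; [|exact H5].
  apply pair_ok.
  - eapply subst_comp; [|apply padn_ok]. eapply subst_comp; [apply peven_ok|exact Hr1].
  - eapply subst_comp; [apply podd_ok|exact H4].
Qed.

End Part5.
Import Part5.

Lemma realizer_ex (U V : rep_space) (HU : is_rep U) (HV : is_rep V) (g : problem U V) :
  exists G, realizes G g.
Proof.
  set (P := fun p q => forall u, delta U p u -> pdom g u -> exists y, delta V q y /\ g u y).
  exists (fun p => match excluded_middle_informative (exists q, P p q) with
           | left e => Some (proj1_sig (constructive_indefinite_description _ e))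
           | right _ => None end).
  intros p u Hp Hd.
  destruct (excluded_middle_informative (exists q, P p q)) as [e|e].
  - destruct (constructive_indefinite_description _ e) as [q Hq]. simpl. eauto.
  - exfalso. apply e. destruct Hd as [y Hy]. destruct HV as [_ Sv]. destruct (Sv y) as [q Hq].
    exists q. intros u' Hu' _. destruct HU as [Fu _]. rewrite (Fu _ _ _ Hu' Hp). eauto.
Qed.

Lemma cototal_part D (HD : HypD D) : cototal (C01_D D).
Proof.
  intros U V HU HV g. split.
  - intros Hred. destruct (A01_ex D HD) as [A01 [DA01 [HA01 HdA01]]].
    assert (A0 : exists q0 (y0 : V), delta V q0 y0).
    { destruct (classic (inhabited (carrier V))) as [[v]|Hn].
      - destruct HV as [_ Sv]. destruct (Sv v) as [q Hq]; eauto.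
      - exfalso. destruct Hred as [tH [tK Hr]].
        assert (HN : realizes (fun _ => None) (ptotal g)).
        { intros p u _ [v _]. exfalso; apply Hn; constructor; exact v. }
        destruct (Hr _ HN _ _ HA01 HdA01) as [r [_ [s [E _]]]]. discriminate. }
    revert Hred. apply (core D HD U V HU HV g U V (ptotal g)
       (fun r => exists u, delta U r u /\ pdom g u) id_p id_p (realizer_ex U V HU HV g) A0).
    + intros s0 y0 _ r ou Hr Hng Hd. exfalso. apply Hng. eauto.
    + intros G HG. exists G. split; [|split].
      * intros r [u [Hu _]]; eauto.
      * intros r ou [u [Hu Hdu]] Hr. destruct HU as [Fu _]. rewrite (Fu _ _ _ Hr Hu).
        destruct (HG r u Hu Hdu) as [s [E [y [Hy Hgy]]]]. exists s. split; auto.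
        exists y. split; auto. intros _; auto.
      * intros r s' _ E. exists r, s'. split; [apply id_ok|]. split; auto. apply id_ok.
  - intros [tH [tK Hr]]. exists tH, tK. intros G HG. apply Hr.
    intros p u Hp Hd. destruct (HG p u Hp) as [s [E [y [Hy Hgy]]]].
    + destruct Hd as [v Hv]. exists v. intros _; auto.
    + exists s. split; auto. exists y. split; auto.
Qed.

Lemma cocomplete_part D (HD : HypD D) : cocomplete (C01_D D).
Proof.
  intros U V HU HV g. split.
  - apply (core D HD U V HU HV g (completion U) (completion V) (pcompletion g)
       (fun r => exists q u, minus1 r q /\ delta U q u /\ pdom g u) m1_p plus1_p
       (realizer_ex U V HU HV g)).
    + exists (fun _ => 0%nat), None. simpl. intros [q [x [Hm _]]]. eapply minus1_zeros; eauto.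
    + intros s0 y0 _ r ou Hr Hng. destruct ou as [u|]; simpl; auto.
      intros Hd. exfalso. apply Hng. simpl in Hr. destruct Hr as [q [Hq Hu]]. eauto.
    + intros G HG.
      exists (fun r => match excluded_middle_informative (exists q, minus1 r q) with
        | left e => match G (proj1_sig (constructive_indefinite_description _ e)) with
                    | Some s => Some (fun n => S (s n)) | None => None end
        | right _ => None end).
      split; [|split].
      * intros r [q [u [Hq [Hu _]]]]. exists (Some u). simpl. eauto.
      * intros r ou [q [u [Hq [Hu Hdu]]]] Hr.
        destruct (excluded_middle_informative (exists q, minus1 r q)) as [e|e]; [|exfalso; eauto].
        destruct (constructive_indefinite_description _ e) as [q' Hq']. simpl.
        rewrite (minus1_fun _ _ _ Hq' Hq).
        destruct (HG q u Hu Hdu) as [s [E [y [Hy Hgy]]]]. rewrite E.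
        eexists; split; [reflexivity|]. exists (Some y). split.
        { simpl. exists s. split; auto. apply minus1_plus1. }
        destruct ou as [u'|]; simpl in Hr.
        { destruct Hr as [q'' [Hq'' Hu']]. rewrite (minus1_fun _ _ _ Hq'' Hq) in Hu'.
          destruct HU as [Fu _]. rewrite (Fu _ _ _ Hu' Hu). simpl. intros _. eauto. }
        { exfalso. apply Hr. eauto. }
      * intros r s' _ E.
        destruct (excluded_middle_informative (exists q, minus1 r q)) as [e|e]; [|discriminate].
        destruct (constructive_indefinite_description _ e) as [q' Hq']. simpl in E.
        destruct (G q') as [s|] eqn:Eg; [|discriminate]. injection E; intros <-.
        exists q', s. split; [apply m1_ok; auto|]. split; auto. apply plus1_ok.
  - intros [tH [tK Hred0]].
    exists (psubst (pair_p peven_p (psubst podd_p m1_p)) tH), (psubst tK plus1_p).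
    intros G' HG' p x Hpx Hdx.
    set (P := fun r q => exists s', G' (fun n => S (r n)) = Some s' /\ minus1 s' q).
    set (G := fun r => match excluded_middle_informative (exists q, P r q) with
           | left e => Some (proj1_sig (constructive_indefinite_description _ e))
           | right _ => None end).
    assert (HG : realizes G g).
    { intros r u Hr Hd.
      assert (Hr' : delta (completion U) (fun n => S (r n)) (Some u)).
      { simpl. exists r. split; auto. apply minus1_plus1. }
      assert (Hd' : pdom (pcompletion g) (Some u)).
      { destruct Hd as [v Hv]. exists (Some v). simpl. intros _. eauto. }
      destruct (HG' _ _ Hr' Hd') as [s' [E [oy [Hoy Hgy]]]].
      simpl in Hgy. destruct (Hgy Hd) as [v [-> Hv]].
      simpl in Hoy. destruct Hoy as [q [Hq Hqv]].
      unfold G. destruct (excluded_middle_informative (exists q, P r q)) as [e|e].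
      - destruct (constructive_indefinite_description _ e) as [q' [s'' [E' Hq']]]. simpl.
        rewrite E in E'. injection E'; intros <-. rewrite (minus1_fun _ _ _ Hq' Hq).
        eexists; split; [reflexivity|]. eauto.
      - exfalso. apply e. exists q, s'. auto. }
    destruct (Hred0 G HG p x Hpx Hdx) as [r [Hrr [s [Hs [u [Hu Hfin]]]]]].
    unfold G in Hs. destruct (excluded_middle_informative (exists q, P r q)) as [e|e]; [|discriminate].
    destruct (constructive_indefinite_description _ e) as [q [s' [E Hq]]]. simpl in Hs.
    injection Hs; intros <-.
    exists (fun n => S (r n)). split.
    { eapply subst_comp; [exact Hrr|]. apply plus1_ok. }
    exists s'. split; auto. exists u. split; auto.
    eapply subst_comp; [|exact Hu]. apply pair_ok. apply peven_ok.
    eapply subst_comp; [apply podd_ok|]. apply m1_ok; auto.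
Qed.

Theorem proposition6p7 (D : closed01_set -> Prop) :
  (forall a b : R, 0 <= a -> a < b -> b <= 1 ->
     (exists A : closed01_set, D A /\ forall x, proj1_sig A x <-> a <= x <= b) /\
     leW (C01_D D) (Cab_D a b D)) ->
  cocomplete (C01_D D) /\ cototal (C01_D D).
Proof.
  intros HD. split; [apply cocomplete_part|apply cototal_part]; exact HD.
Qed.
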